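(* Let $\Psi=P\cap\mathrm{Cl}^+(3)$, where $P$ is the group generated under the geometric product by $a_2,a_3$ and $e_1e_2e_3$; $\Psi$ is a set of 20 spinors forming a root system of type $H_2\oplus H_2$ inside the 120-element $H_4$ root system $2I$. Let $\mathcal{G}=2I\setminus\Psi$ (100 elements, the vertex set of the Grand Antiprism). Then both $\Psi$ and $\mathcal{G}$ are invariant under the reflection group $H_2\times H_2$ generated by the reflections $s_R(X)=-R\tilde XR$, $R\in\Psi$.
   Context: $\mathrm{Cl}(3)$ is the real Clifford algebra of Euclidean $\mathbb{R}^3$ with orthonormal basis $e_1,e_2,e_3$ ($e_i^2=1$, $e_ie_j=-e_je_i$ for $i\neq j$). The even subalgebra $\mathrm{Cl}^+(3)$ is spanned by $1,e_2e_3,e_3e_1,e_1e_2$ (spinors). Reversal $\tilde{\ }$ reverses the order of vector factors. The spinor inner product $(R_1,R_2)=\tfrac12(R_1\tilde R_2+R_2\tilde R_1)$ makes $\mathrm{Cl}^+(3)$ a 4D Euclidean space with orthonormal basis $1,e_2e_3,e_3e_1,e_1e_2$; for a unit spinor $R$, $s_R(X)=X-2(R,X)R=-R\tilde XR$ is the reflection in the hyperplane orthogonal to $R$. Let $\tau=\frac{1+\sqrt5}{2}$. The $H_3$ simple roots are $a_1=e_2$, $a_2=\tfrac12(-\tau e_1-e_2-(\tau-1)e_3)$, $a_3=e_1$. The binary icosahedral group $2I$ is the set of all products of an even number of factors from $\{a_1,a_2,a_3\}$ (order 120); viewed as 120 vectors in the 4D spinor space it is the $H_4$ root system (600-cell).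 *)

(* Defs.v *)
From HB Require Import structures.
From mathcomp Require Import all_boot all_order all_algebra.
Set Implicit Arguments. Unset Strict Implicit. Unset Printing Implicit Defensive.
Import Order.TTheory GRing.Theory Num.Theory.
Local Open Scope ring_scope.

Notation mv R := {ffun {set 'I_3} -> R}.

Section Cl3.
Variable R : rcfType.

(* A multivector of Cl(3) is given by its coordinates on the basis blades
   e_A, A a subset of {1,2,3} = 'I_3 (e_A = product of e_i, i in A, in
   increasing order). *)

(* sign of e_A e_B = sign * e_(A symmetric-difference B), Euclidean metric e_i^2 = 1 *)
Definition blade_sign (A B : {set 'I_3}) : R :=
  (-1) ^+ #|[set p : 'I_3 * 'I_3 | [&& p.1 \in A, p.2 \in B & (p.2 < p.1)%N]]|.

Definition symdiff (A B : {set 'I_3}) : {set 'I_3} := (A :\: B) :|: (B :\: A).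

Definition gp (x y : mv R) : mv R :=
  [ffun C : {set 'I_3} => \sum_(A : {set 'I_3}) \sum_(B : {set 'I_3})
      (if symdiff A B == C then blade_sign A B * x A * y B else 0)].

Definition rev (x : mv R) : mv R := [ffun A : {set 'I_3} => (-1) ^+ 'C(#|A|, 2) * x A].

Definition scal (r : R) : mv R := [ffun A : {set 'I_3} => if A == set0 then r else 0].
Definition e (i : 'I_3) : mv R := [ffun A : {set 'I_3} => if A == [set i] then 1 else 0].
Definition smul (k : R) (x : mv R) : mv R := [ffun A : {set 'I_3} => k * x A].
Definition e1 : mv R := e ord0.
Definition e2 : mv R := e (inord 1).
Definition e3 : mv R := e (inord 2).
Definition e123 : mv R := gp (gp e1 e2) e3.

Definition even (x : mv R) : bool := [forall A : {set 'I_3}, odd #|A| ==> (x A == 0)].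

Definition tau : R := (1 + Num.sqrt 5) / 2.

Definition a1 : mv R := e2.
Definition a2 : mv R := smul (2^-1) (- smul tau e1 - e2 - smul (tau - 1) e3).
Definition a3 : mv R := e1.

Definition H3gen (x : mv R) : Prop := x = a1 \/ x = a2 \/ x = a3.

Inductive in2I : mv R -> Prop :=
| in2I_one : in2I (scal 1)
| in2I_step x a b : in2I x -> H3gen a -> H3gen b -> in2I (gp (gp x a) b).

(* P: the group generated by a2, a3, e1e2e3 under the geometric product.
   All generators have finite order (a2^2 = a3^2 = 1, e123^4 = 1), so the
   generated group coincides with the generated monoid. *)
Definition Pgen (x : mv R) : Prop := x = a2 \/ x = a3 \/ x = e123.

Inductive inP : mv R -> Prop :=
| inP_one : inP (scal 1)
| inP_step x g : inP x -> Pgen g -> inP (gp x g).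

Definition inPsi (x : mv R) : Prop := inP x /\ even x.

Definition inGA (x : mv R) : Prop := in2I x /\ ~ inPsi x.

Definition refl (Rr : mv R) (X : mv R) : mv R := - gp (gp Rr (rev X)) Rr.

(* the reflection group generated by s_R, R in Psi.  Each s_R is an
   involution, so finite compositions already form the generated group. *)
Inductive inW : (mv R -> mv R) -> Prop :=
| inW_id : inW id
| inW_step Rr w : inPsi Rr -> inW w -> inW (refl Rr \o w).

End Cl3.

(* Main.v *)
From Pilot Require Import Defs.
From mathcomp Require Import all_boot all_order all_algebra.
From mathcomp Require Import ring.
Set Implicit Arguments. Unset Strict Implicit. Unset Printing Implicit Defensive.
Import Order.TTheory GRing.Theory Num.Theory.
Local Open Scope ring_scope.

Definition k0 : 'I_3 := @Ordinal 3 0 isT.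
Definition k1 : 'I_3 := @Ordinal 3 1 isT.
Definition k2 : 'I_3 := @Ordinal 3 2 isT.

Lemma sum3 (F : 'I_3 -> nat) : (\sum_(i < 3) F i)%N = (F k0 + F k1 + F k2)%N.
Proof.
rewrite !big_ord_recl big_ord0 addn0 addnA.
by congr (F _ + F _ + F _)%N; apply: val_inj.
Qed.

Lemma card_bits (A : {set 'I_3}) : #|A| = ((k0 \in A) + (k1 \in A) + (k2 \in A))%N.
Proof. by rewrite -sum1_card big_mkcond /= sum3. Qed.

Definition inv (A B : {set 'I_3}) : nat :=
  #|[set p : 'I_3 * 'I_3 | [&& p.1 \in A, p.2 \in B & (p.2 < p.1)%N]]|.

Lemma inv_bits A B : inv A B =
  (((k0 \in B) && (k1 \in A)) + ((k0 \in B) && (k2 \in A)) + ((k1 \in B) && (k2 \in A)))%N.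
Proof.
rewrite /inv cardsE -sum1_card big_mkcond /=.
rewrite (eq_bigr (fun p : 'I_3 * 'I_3 => nat_of_bool ((p.1 \in A) && (p.2 \in B) && (p.2 < p.1)%N))); last first.
  by case=> i j _; rewrite unfold_in /= -andbA; case: ifP.
rewrite -(pair_bigA _ (fun i j : 'I_3 => nat_of_bool ((i \in A) && (j \in B) && (j < i)%N))) /=.
rewrite sum3 !sum3 /=.
by case: (k0 \in A); case: (k1 \in A); case: (k2 \in A); case: (k0 \in B); case: (k1 \in B); case: (k2 \in B).
Qed.

Lemma in_symdiff (x : 'I_3) A B : (x \in symdiff A B) = (x \in A) (+) (x \in B).
Proof. by rewrite !inE; case: (x \in A); case: (x \in B). Qed.

Ltac bits := rewrite ?card_bits ?inv_bits ?in_symdiff ?in_set0 ?in_setT;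
  repeat match goal with |- context [?k \in ?X] => case: (k \in X) end.

Lemma cocycle_nat A B D :
  odd (inv (symdiff A B) (symdiff (symdiff A B) D) + inv A B) =
  odd (inv A (symdiff A D) + inv B (symdiff (symdiff A B) D)).
Proof. bits; by []. Qed.

Lemma rev_nat (A C : {set 'I_3}) :
  odd ('C(#|C|, 2) + inv A (symdiff A C)) =
  odd (inv (symdiff A C) A + 'C(#|symdiff A C|, 2) + 'C(#|A|, 2)).
Proof. bits; by []. Qed.

Lemma even_nat (A C : {set 'I_3}) : odd #|C| -> odd #|A| || odd #|symdiff A C|.
Proof. bits; by []. Qed.

Lemma central_nat (A : {set 'I_3}) : odd (inv A setT) = odd (inv setT A).
Proof. bits; by []. Qed.

Lemma inv0l (A : {set 'I_3}) : inv set0 A = 0%N.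
Proof. bits; by []. Qed.
Lemma inv0r (A : {set 'I_3}) : inv A set0 = 0%N.
Proof. bits; by []. Qed.

Lemma sdK (A B : {set 'I_3}) : symdiff A (symdiff A B) = B.
Proof. apply/setP => x; bits; by []. Qed.
Lemma sd_swap (A B D : {set 'I_3}) : symdiff B (symdiff A D) = symdiff (symdiff A B) D.
Proof. apply/setP => x; bits; by []. Qed.
Lemma sdC (A B : {set 'I_3}) : symdiff A B = symdiff B A.
Proof. apply/setP => x; bits; by []. Qed.
Lemma sd0 (A : {set 'I_3}) : symdiff A set0 = A.
Proof. apply/setP => x; bits; by []. Qed.
Lemma sd0' (A B : {set 'I_3}) : (symdiff A B == set0) = (A == B).
Proof.
apply/eqP/eqP => [h|->]; last by apply/setP => x; bits.
by rewrite -(sd0 A) -h sdK.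
Qed.
Lemma sdv (A : {set 'I_3}) : symdiff A A = set0.
Proof. apply/setP => x; bits; by []. Qed.
Lemma sdK' (A B : {set 'I_3}) : symdiff (symdiff A B) A = B.
Proof. apply/setP => x; bits; by []. Qed.
Lemma inj_sd (A : {set 'I_3}) : injective (symdiff A).
Proof. exact: (can_inj (sdK A)). Qed.

Notation crev := Pilot.Defs.rev.
Section Gen.
Variable R : rcfType.
Local Notation mv := (mv R).

Lemma bsE A B : blade_sign R A B = (-1) ^+ inv A B.
Proof. by []. Qed.

Lemma sgn_odd m n : odd m = odd n -> (-1) ^+ m = (-1) ^+ n :> R.
Proof. by move=> h; rewrite -signr_odd h signr_odd. Qed.

Lemma gpE (x y : mv) C :
  gp x y C = \sum_A blade_sign R A (symdiff A C) * x A * y (symdiff A C).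
Proof.
rewrite ffunE; apply: eq_bigr => A _.
rewrite (bigD1 (symdiff A C)) //= sdK eqxx big1 ?addr0 // => B nB.
rewrite ifN //; apply: contra nB => /eqP <-; by rewrite sdK.
Qed.

Lemma gpA (x y z : mv) : gp (gp x y) z = gp x (gp y z).
Proof.
apply/ffunP => D; rewrite [LHS]gpE [RHS]gpE.
under eq_bigr => C _ do rewrite gpE big_distrr big_distrl /=.
under [RHS]eq_bigr => A _ do rewrite gpE big_distrr /=.
rewrite [LHS]exchange_big; apply: eq_bigr => A _.
rewrite [LHS](reindex_inj (@inj_sd A)) /=; apply: eq_bigr => B _.
rewrite sdK sd_swap.
have h : blade_sign R (symdiff A B) (symdiff (symdiff A B) D) * blade_sign R A B =
   blade_sign R A (symdiff A D) * blade_sign R B (symdiff (symdiff A B) D).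
  by rewrite !bsE -!exprD; apply: sgn_odd; apply: cocycle_nat.
transitivity ((blade_sign R (symdiff A B) (symdiff (symdiff A B) D) * blade_sign R A B) *
  (x A * y B * z (symdiff (symdiff A B) D))); first by ring.
by rewrite h; ring.
Qed.

Lemma gp1l (x : mv) : gp (scal 1) x = x.
Proof.
apply/ffunP => C; rewrite gpE (bigD1 set0) //= big1 ?addr0.
  by rewrite !ffunE eqxx bsE inv0l (sdC set0) sd0 !mul1r.
by move=> A nA; rewrite !ffunE (negbTE nA) mulr0 mul0r.
Qed.

Lemma gp1r (x : mv) : gp x (scal 1) = x.
Proof.
apply/ffunP => C; rewrite gpE (bigD1 C) //= big1 ?addr0.
  by rewrite !ffunE sd0' eqxx sdv bsE inv0r !mulr1 mul1r.
by move=> A nA; rewrite !ffunE sd0' (negbTE nA) mulr0.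
Qed.

Lemma gpNl (x y : mv) : gp (- x) y = - gp x y.
Proof.
apply/ffunP => C; rewrite gpE [RHS]ffunE !gpE -sumrN; apply: eq_bigr => A _.
by rewrite ffunE /=; ring.
Qed.

Lemma gpNr (x y : mv) : gp x (- y) = - gp x y.
Proof.
apply/ffunP => C; rewrite gpE [RHS]ffunE !gpE -sumrN; apply: eq_bigr => A _.
by rewrite ffunE /=; ring.
Qed.

Lemma gpDl (x y z : mv) : gp (x + y) z = gp x z + gp y z.
Proof.
apply/ffunP => C; rewrite gpE [RHS]ffunE !gpE -big_split; apply: eq_bigr => A _.
by rewrite ffunE /=; ring.
Qed.

Lemma gpDr (x y z : mv) : gp x (y + z) = gp x y + gp x z.
Proof.
apply/ffunP => C; rewrite gpE [RHS]ffunE !gpE -big_split; apply: eq_bigr => A _.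
by rewrite ffunE /=; ring.
Qed.

Lemma gpZl k (x y : mv) : gp (smul k x) y = smul k (gp x y).
Proof.
apply/ffunP => C; rewrite gpE [RHS]ffunE !gpE big_distrr; apply: eq_bigr => A _.
by rewrite ffunE /=; ring.
Qed.

Lemma gpZr k (x y : mv) : gp x (smul k y) = smul k (gp x y).
Proof.
apply/ffunP => C; rewrite gpE [RHS]ffunE !gpE big_distrr; apply: eq_bigr => A _.
by rewrite ffunE /=; ring.
Qed.

Lemma rev_gp (x y : mv) : crev (gp x y) = gp (crev y) (crev x).
Proof.
apply/ffunP => C; rewrite [LHS]ffunE !gpE big_distrr.
rewrite [RHS](reindex_inj (@inj_sd C)) /=; apply: eq_bigr => A _.
rewrite !ffunE sdK' (sdC C A).
have h : (-1) ^+ 'C(#|C|, 2) * blade_sign R A (symdiff A C) =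
  blade_sign R (symdiff A C) A * (-1) ^+ 'C(#|symdiff A C|, 2) * (-1) ^+ 'C(#|A|, 2).
  by rewrite !bsE -!exprD; apply: sgn_odd; apply: rev_nat.
transitivity (((-1) ^+ 'C(#|C|, 2) * blade_sign R A (symdiff A C)) * (x A * y (symdiff A C)));
  first by ring.
by rewrite h; ring.
Qed.

Lemma crevN (x : mv) : crev (- x) = - crev x.
Proof. by apply/ffunP => A; rewrite !ffunE mulrN. Qed.

Lemma crevK (x : mv) : crev (crev x) = x.
Proof.
by apply/ffunP => A; rewrite !ffunE mulrA -exprD addnn -signr_odd odd_double expr0 mul1r.
Qed.

Lemma crev1 : crev (scal 1) = scal 1 :> mv.
Proof. apply/ffunP => A; rewrite !ffunE; case: eqP => [->|_]; by rewrite ?cards0 ?mulr0 ?mul1r. Qed.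

Lemma even_gp (x y : mv) : even x -> even y -> even (gp x y).
Proof.
move=> /forallP hx /forallP hy; apply/forallP => C; apply/implyP => oC.
rewrite gpE big1 // => A _.
case/orP: (even_nat A oC) => h.
  by move/implyP: (hx A) => /(_ h) /eqP ->; rewrite mulr0 mul0r.
by move/implyP: (hy (symdiff A C)) => /(_ h) /eqP ->; rewrite mulr0.
Qed.

Lemma even_rev (x : mv) : even x -> even (crev x).
Proof.
move=> /forallP hx; apply/forallP => C; apply/implyP => oC.
by move/implyP: (hx C) => /(_ oC) /eqP h; rewrite ffunE h mulr0.
Qed.

Lemma even_N (x : mv) : even x -> even (- x).
Proof.
move=> /forallP hx; apply/forallP => C; apply/implyP => oC.
by move/implyP: (hx C) => /(_ oC) /eqP h; rewrite ffunE h oppr0.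
Qed.

End Gen.

Section Conc.
Variable R : rcfType.
Local Notation mv := (mv R).

Lemma sgnE n : (-1) ^+ n = (if odd n then -1 else 1) :> R.
Proof. by rewrite -signr_odd; case: (odd n); rewrite ?expr1 ?expr0. Qed.

Ltac sgn := rewrite ?sgnE; repeat match goal with |- context[odd ?n] =>
   let b := eval vm_compute in (odd n) in rewrite (_ : odd n = b); last by vm_compute end.

Definition blade (B : {set 'I_3}) : mv := [ffun C => if C == B then 1 else 0].

Lemma gp_blade A B : gp (blade A) (blade B) = smul (blade_sign R A B) (blade (symdiff A B)).
Proof.
apply/ffunP => C; rewrite gpE (bigD1 A) //= big1 ?addr0 => [|D nD]; last first.
  by rewrite !ffunE (negbTE nD) mulr0 mul0r.
rewrite !ffunE eqxx mulr1.
have [->|nC] := eqVneq C (symdiff A B); first by rewrite sdK !eqxx.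
rewrite ifN ?mulr0 //; apply: contra nC => /eqP <-; by rewrite sdK.
Qed.

Lemma k0E : ord0 = k0. Proof. exact: val_inj. Qed.
Lemma k1E : inord 1 = k1. Proof. by apply: val_inj; rewrite /= inordK. Qed.
Lemma k2E : inord 2 = k2. Proof. by apply: val_inj; rewrite /= inordK. Qed.

Lemma e123E : e123 R = blade setT.
Proof.
rewrite /e123 /e1 /e2 /e3 k0E k1E k2E.
rewrite -[e R k0]/(blade _) -[e R k1]/(blade _) -[e R k2]/(blade _).
rewrite gp_blade gpZl gp_blade.
apply/ffunP => C; rewrite !ffunE.
have -> : symdiff (symdiff [set k0] [set k1]) [set k2] = setT.
  by apply/setP => x; rewrite !in_symdiff !in_set1 in_setT; case: x => [[|[|[|]]]].
rewrite !bsE !inv_bits !in_symdiff !in_set1 /=.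
by rewrite !expr0 !mul1r.
Qed.

Lemma blade0 : blade set0 = scal 1.
Proof. by []. Qed.

Lemma e_blade i : e R i = blade [set i].
Proof. by []. Qed.

Lemma e123_central (x : mv) : gp x (e123 R) = gp (e123 R) x.
Proof.
rewrite e123E; apply/ffunP => C; rewrite !gpE.
rewrite (bigD1 (symdiff C setT)) //= big1 ?addr0 => [|A nA]; last first.
  rewrite !ffunE ifN ?mulr0 //; apply: contra nA => /eqP <-.
  by rewrite (sdC A C) sdK.
rewrite [RHS](bigD1 setT) //= [X in _ = _ + X]big1 ?addr0 => [|A nA]; last first.
  by rewrite !ffunE (negbTE nA) mulr0 mul0r.
rewrite !ffunE eqxx sdK' mulr1 (sdC setT C) !eqxx mulr1.
congr (_ * _); rewrite !bsE; apply: sgn_odd; exact: central_nat.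
Qed.

Lemma e123_sq : gp (e123 R) (e123 R) = - scal 1.
Proof.
rewrite e123E gp_blade sdv; apply/ffunP => C; rewrite !ffunE.
rewrite bsE inv_bits !in_setT /=.
by sgn; rewrite mulN1r.
Qed.

Lemma e123_rev : crev (e123 R) = - e123 R.
Proof.
rewrite e123E; apply/ffunP => C; rewrite !ffunE.
have [->|_] := eqVneq C setT; last by rewrite mulr0 oppr0.
by rewrite cardsT card_ord; sgn; rewrite mulr1.
Qed.

Lemma ee_same i : gp (e R i) (e R i) = scal 1.
Proof.
rewrite !e_blade gp_blade sdv; apply/ffunP => C; rewrite !ffunE.
rewrite bsE inv_bits !in_set1.
by case: i => [[|[|[|]]] ?] //=; sgn; rewrite mul1r.
Qed.

Lemma ee_anti i j : i != j -> gp (e R j) (e R i) = - gp (e R i) (e R j).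
Proof.
rewrite !e_blade !gp_blade (sdC [set j]) => nij; apply/ffunP => C; rewrite !ffunE.
rewrite !bsE !inv_bits !in_set1.
by move: nij; case: i => [[|[|[|]]] ?]; case: j => [[|[|[|]]] ?] //=;
  sgn; rewrite ?mulN1r ?mul1r ?opprK.
Qed.

Lemma m1_word : gp (gp (gp (e R k1) (e R k0)) (e R k1)) (e R k0) = - scal 1.
Proof.
rewrite gpA !e_blade !gp_blade gpZl gpZr gp_blade sdv; apply/ffunP => C; rewrite !ffunE.
rewrite !bsE !inv_bits !in_symdiff !in_set1 /=.
sgn; case: (C == set0); ring.
Qed.

Lemma tau_sq : tau R ^+ 2 = tau R + 1.
Proof.
rewrite /tau; have h5 : Num.sqrt (5 : R) ^+ 2 = 5 by rewrite sqr_sqrtr // ler0n.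
have h2 : (2 : R) != 0 by rewrite pnatr_eq0.
apply/eqP; rewrite -subr_eq0; apply/eqP.
have -> : ((1 + Num.sqrt 5) / 2) ^+ 2 - ((1 + Num.sqrt 5) / 2 + 1) =
   (Num.sqrt (5 : R) ^+ 2 - 5) / 4 :> R by field.
by rewrite h5 subrr mul0r.
Qed.

Lemma a2_sq : gp (a2 R) (a2 R) = scal 1.
Proof.
rewrite /a2 /e1 /e2 /e3 k0E k1E k2E.
rewrite !(gpZl, gpZr, gpDl, gpDr, gpNl, gpNr).
rewrite !ee_same (@ee_anti k0 k1) // (@ee_anti k0 k2) // (@ee_anti k1 k2) //.
move: (gp (e R k0) (e R k1)) (gp (e R k0) (e R k2)) (gp (e R k1) (e R k2)) (scal 1 : mv) => p01 p02 p12 o.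
apply/ffunP => C; rewrite !ffunE /=.
have h2 : (2 : R) != 0 by rewrite pnatr_eq0.
apply/eqP; rewrite -subr_eq0; apply/eqP.
transitivity ((tau R ^+ 2 - tau R - 1) * (o C / 2)); first by field.
have -> : tau R ^+ 2 - tau R - 1 = 0 by rewrite tau_sq; ring.
by rewrite mul0r.
Qed.

Lemma a3_sq : gp (a3 R) (a3 R) = scal 1.
Proof. exact: ee_same. Qed.

Lemma rev_vec (x : mv) : (forall A : {set 'I_3}, (1 < #|A|)%N -> x A = 0) -> crev x = x.
Proof.
move=> h; apply/ffunP => A; rewrite ffunE.
case: (leqP #|A| 1) => hA; last by rewrite h // mulr0.
by rewrite bin_small ?expr0 ?mul1r // ltnS.
Qed.

Lemma e_big i (A : {set 'I_3}) : (1 < #|A|)%N -> e R i A = 0.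
Proof.
move=> h; rewrite ffunE; case: eqP => // hA.
by move: h; rewrite hA cards1.
Qed.

Lemma rev_e i : crev (e R i) = e R i.
Proof. by apply: rev_vec => A; apply: e_big. Qed.

Lemma rev_a2 : crev (a2 R) = a2 R.
Proof.
apply: rev_vec => A hA; rewrite /a2 /e1 /e2 /e3.
move: (e_big ord0 hA) (e_big (inord 1) hA) (e_big (inord 2) hA).
move: (e R ord0) (e R (inord 1)) (e R (inord 2)) => u v w hu hv hw.
by rewrite !ffunE hu hv hw; ring.
Qed.

End Conc.

Section Main.
Variable R : rcfType.
Local Notation mv := (mv R).

Lemma rev_a1 : crev (a1 R) = a1 R. Proof. exact: rev_e. Qed.
Lemma rev_a3 : crev (a3 R) = a3 R. Proof. exact: rev_e. Qed.

Lemma H3_rev (a : mv) : H3gen a -> crev a = a.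
Proof. by case=> [->|[->|->]]; rewrite ?rev_a1 ?rev_a2 ?rev_a3. Qed.

Lemma inP_gp (x y : mv) : inP x -> inP y -> inP (gp x y).
Proof.
move=> hx; elim=> [|y0 g _ IH hg]; first by rewrite gp1r.
by rewrite -gpA; apply: inP_step.
Qed.

Lemma inP_gen (g : mv) : Pgen g -> inP g.
Proof. by move=> hg; rewrite -(gp1l g); apply: inP_step => //; apply: inP_one. Qed.

Lemma inP_N (x : mv) : inP x -> inP (- x).
Proof.
move=> hx; rewrite -(gp1r x) -gpNr -e123_sq; apply: inP_gp => //.
by apply: inP_gp; apply: inP_gen; right; right.
Qed.

Lemma inP_rev (x : mv) : inP x -> inP (crev x).
Proof.
elim=> [|y g _ IH hg]; first by rewrite crev1; apply: inP_one.
rewrite rev_gp; apply: inP_gp => //.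
case: hg => [->|[->|->]].
- by rewrite rev_a2; apply: inP_gen; left.
- by rewrite rev_a3; apply: inP_gen; right; left.
- by rewrite e123_rev; apply: inP_N; apply: inP_gen; right; right.
Qed.

Lemma Psi_refl (r X : mv) : inPsi r -> inPsi X -> inPsi (refl r X).
Proof.
move=> [hr er] [hX eX]; split.
  by apply: inP_N; apply: inP_gp => //; apply: inP_gp => //; apply: inP_rev.
by apply: even_N; apply: even_gp => //; apply: even_gp => //; apply: even_rev.
Qed.

Inductive inWd : bool -> mv -> Prop :=
| wd1 : inWd false (scal 1)
| wds p x a : inWd p x -> H3gen a -> inWd (~~ p) (gp x a).

Lemma wd_gp p q (x y : mv) : inWd p x -> inWd q y -> inWd (p (+) q) (gp x y).
Proof.
move=> hx; elim=> [|q0 y0 a _ IH ha]; first by rewrite gp1r addbF.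
by rewrite -gpA addbN; apply: wds.
Qed.

Lemma wd_gen (a : mv) : H3gen a -> inWd true a.
Proof. by move=> ha; rewrite -(gp1l a); apply: (wds wd1). Qed.

Lemma wd_rev p (x : mv) : inWd p x -> inWd p (crev x).
Proof.
elim=> [|q y a _ IH ha]; first by rewrite crev1; apply: wd1.
rewrite rev_gp (H3_rev ha); exact: (wd_gp (wd_gen ha) IH).
Qed.

Lemma I_wd (x : mv) : in2I x -> inWd false x.
Proof.
elim=> [|y a b _ IH ha hb]; first exact: wd1.
exact: (wds (wds IH ha) hb).
Qed.

Lemma wd_I (x : mv) : inWd false x -> in2I x.
Proof.
suff: forall p, inWd p x -> if p then exists y a, [/\ in2I y, H3gen a & x = gp y a] else in2I x.
  by move=> h /h.
move=> p; elim=> [|q y a _ IH ha]; first exact: in2I_one.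
case: q IH => /= IH.
  by case: IH => z [b [hz hb ->]]; apply: in2I_step.
by exists y, a.
Qed.

Lemma wd_m1 : inWd false (- scal 1 : mv).
Proof.
rewrite -(m1_word R) -k1E -k0E.
have h1 : H3gen (e R (inord 1)) by left.
have h3 : H3gen (e R ord0) by right; right.
exact: (wds (wds (wds (wd_gen h1) h3) h1) h3).
Qed.

Lemma wd_N p (x : mv) : inWd p x -> inWd p (- x).
Proof.
move=> hx; rewrite -(gp1r x) -gpNr; rewrite -[p]addbF; exact: wd_gp hx wd_m1.
Qed.

Lemma P_dec (r : mv) : inP r -> exists p u, inWd p u /\ (r = u \/ r = gp u (e123 R)).
Proof.
elim=> [|y g _ [p [u [hu hy]]] hg]; first by exists false, (scal 1); split => //; [apply: wd1 | left].
case: hg => [hg|[hg|hg]].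
- exists (~~ p), (gp u g); split; first by apply: wds => //; right; left.
  case: hy => ->; first by left.
  right.
  by rewrite gpA -e123_central -gpA.
- exists (~~ p), (gp u g); split; first by apply: wds => //; right; right.
  case: hy => ->; first by left.
  right.
  by rewrite gpA -e123_central -gpA.
- case: hy => ->; first by exists p, u; split => //; right; rewrite hg.
  exists p, (- u); split; first exact: wd_N.
  by left; rewrite hg gpA e123_sq gpNr gp1r.
Qed.

Lemma I_refl (r X : mv) : inP r -> in2I X -> in2I (refl r X).
Proof.
move=> /P_dec [p [u [hu hr]]] /I_wd /wd_rev hY; apply: wd_I; apply: wd_N.
rewrite (_ : false = p (+) false (+) p); last by rewrite addbF addbb.
case: hr => ->; first exact: wd_gp (wd_gp hu hY) hu.
set e := e123 R; set Y := crev X.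
have h1 : gp (gp u e) Y = gp (gp u Y) e by rewrite gpA -(e123_central Y) -gpA.
have -> : gp (gp (gp u e) Y) (gp u e) = - gp (gp u Y) u.
  by rewrite h1 gpA (e123_central u) -(gpA e e u) e123_sq gpNl gp1l gpNr.
by apply: wd_N; exact: wd_gp (wd_gp hu hY) hu.
Qed.

Lemma gen_unit (g : mv) : Pgen g -> gp g (crev g) = scal 1 /\ gp (crev g) g = scal 1.
Proof.
case=> [->|[->|->]].
- by rewrite rev_a2 a2_sq.
- by rewrite rev_a3 a3_sq.
- by rewrite e123_rev gpNr gpNl e123_sq opprK.
Qed.

Lemma P_unit (r : mv) : inP r -> gp r (crev r) = scal 1 /\ gp (crev r) r = scal 1.
Proof.
elim=> [|y g _ [IH1 IH2] hg]; first by rewrite crev1 gp1l.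
have [g1 g2] := gen_unit hg.
rewrite rev_gp; split.
  by rewrite gpA -(gpA g) g1 gp1l IH1.
by rewrite gpA -(gpA (crev y)) IH2 gp1l g2.
Qed.

Lemma refl_inv (r X : mv) : inP r -> refl r (refl r X) = X.
Proof.
move=> /P_unit [h1 h2]; rewrite /refl.
rewrite crevN !rev_gp (crevK X) gpNr gpNl opprK.
by rewrite !gpA h2 gp1r -gpA h1 gp1l.
Qed.

End Main.

Unset Implicit Arguments.
Local Close Scope ring_scope.

Theorem mainTheorem6 (R : rcfType) :
  forall w : mv R -> mv R, inW w ->
    (forall X, inPsi X -> inPsi (w X)) /\ (forall X, inGA X -> inGA (w X)).
Proof.
move=> w; elim=> [|r w0 hr _ [IH1 IH2]]; first by split.
split => X hX /=; first by apply: Psi_refl => //; apply: IH1.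
have [hI hN] := IH2 X hX; split; first by apply: I_refl => //; case: hr.
move=> hP; apply: hN; rewrite -(refl_inv (w0 X) (proj1 hr)).
exact: Psi_refl.
Qed.
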